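(* Let $X$ be an undirected graph and let $f:Y\to X$, $g:Z\to X$ be objects of $C_X$ such that $Y$ and $Z$ have no loops and, for every $p\ge1$, have finitely many $p$-cycles without backtracking. If there is a morphism $h:Y\to Z$ in $C_X$ (from $f$ to $g$) which is a weak equivalence for the model on $C_X$ defined by counting $R_X=\bigcup_{p\ge1}R^p_X$, then $Y$ and $Z$ have the same Ihara zeta function.
   Context: An undirected graph has nodes $X(0)$, half-arcs $X(1)$, $s,t:X(1)\to X(0)$, and an involution $\iota$ with $s\circ\iota=t$; morphisms commute with $s,t,\iota$. An arc is a pair $\{u,\iota(u)\}$; a loop is an arc whose source and target coincide. $X(x,* )$ is the set of arcs having $x$ as source or target. A morphism $f$ is a covering if for every node $x$ the induced map $X(x,* )\to Y(f_0(x),* )$ is bijective. $C_X$: objects are coverings $Y\to X$; morphisms from $f:Y\to X$ to $g:Z\to X$ are coverings $h:Y\to Z$ with $g\circ h=f$. For $p\ge1$, $c^p_U$ has nodes $\mathbb{Z}/p\mathbb{Z}$ and half-arcs $[n]^\pm$ with $s([n]^+)=[n]$, $t([n]^+)=[n+1]$, $s([n]^-)=[n+1]$, $t([n]^-)=[n]$, $\iota([n]^+)=[n]^-$; a $p$-cycle is a morphism $c^p_U\to Y$, with backtracking if $h_1([n+1]^+)=h_1([n]^-)$ for some $n$. $R^p_X$ is the set of objects $U\to X$ of $C_X$ where $U$ contains a subgraph isomorphic to $c^p_U$ and removing its arcs leaves a forest each of whose trees meets the cycle in exactly one node. A morphism $h$ from $f:Y\to X$ to $g:Z\to X$ in $C_X$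 is a weak equivalence if for every $p\ge1$ and every $U\in R^p_X$, composition with $h$ is a bijection $\mathrm{Hom}_{C_X}(U,Y)\to\mathrm{Hom}_{C_X}(U,Z)$. If $c_p(Y)$ denotes the number of $p$-cycles of $Y$ without backtracking, the Ihara zeta function of $Y$ is $\exp\big(\sum_{p\ge1} c_p(Y)t^p/p\big)$. *)

(* Defs.v *)
From HB Require Import structures.
From mathcomp Require Import all_boot all_order all_algebra.
From Stdlib Require Import Relation_Operators List.
Set Implicit Arguments. Unset Strict Implicit. Unset Printing Implicit Defensive.
Import Order.TTheory GRing.Theory Num.Theory.

Record graph := Graph {
  node : Type;
  harc : Type;
  src : harc -> node;
  tgt : harc -> node;
  inv : harc -> harc;
  inv_invol : forall e, inv (inv e) = e;
  src_inv : forall e, src (inv e) = tgt e }.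
Arguments src {g}. Arguments tgt {g}. Arguments inv {g}.

Record mor (G H : graph) := Mor {
  mor0 : node G -> node H;
  mor1 : harc G -> harc H;
  mor_src : forall e, src (mor1 e) = mor0 (src e);
  mor_tgt : forall e, tgt (mor1 e) = mor0 (tgt e);
  mor_inv : forall e, mor1 (inv e) = inv (mor1 e) }.

Definition mor_comp (G H K : graph) (g : mor H K) (f : mor G H) : mor G K.
Proof.
refine (@Mor G K (fun x => mor0 g (mor0 f x)) (fun e => mor1 g (mor1 f e)) _ _ _).
- by move=> e; rewrite mor_src mor_src.
- by move=> e; rewrite mor_tgt mor_tgt.
- by move=> e; rewrite mor_inv mor_inv.
Defined.

Definition arc_at (G : graph) (x : node G) (e : harc G) : Prop :=
  src e = x \/ tgt e = x.
Definition same_arc (G : graph) (e e' : harc G) : Prop := e' = e \/ e' = inv e.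

(* covering: the induced map X(x,* ) -> Y(f0 x,* ) on arcs is bijective *)
Definition covering (G H : graph) (f : mor G H) : Prop :=
  forall x : node G,
    (forall e e', arc_at x e -> arc_at x e' ->
        same_arc (mor1 f e) (mor1 f e') -> same_arc e e') /\
    (forall d, arc_at (mor0 f x) d ->
        exists e, arc_at x e /\ same_arc (mor1 f e) d).

Definition no_loops (G : graph) : Prop := forall e : harc G, src e <> tgt e.

(* nodes Z/pZ = 'I_p with successor ordS; half-arcs [n]^+ = (n,true), [n]^- = (n,false) *)
Definition cyc_src p (a : 'I_p * bool) : 'I_p := if a.2 then a.1 else ordS a.1.
Definition cyc_tgt p (a : 'I_p * bool) : 'I_p := if a.2 then ordS a.1 else a.1.
Definition cyc_inv p (a : 'I_p * bool) : 'I_p * bool := (a.1, ~~ a.2).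

Lemma cyc_inv_invol p (a : 'I_p * bool) : cyc_inv (cyc_inv a) = a.
Proof. by case: a => n b; rewrite /cyc_inv /= negbK. Qed.
Lemma cyc_src_inv p (a : 'I_p * bool) : cyc_src (cyc_inv a) = cyc_tgt a.
Proof. by case: a => n [] . Qed.

Definition cycle_graph (p : nat) : graph :=
  @Graph 'I_p ('I_p * bool) (@cyc_src p) (@cyc_tgt p) (@cyc_inv p)
         (@cyc_inv_invol p) (@cyc_src_inv p).

Definition pcycle (p : nat) (Y : graph) := mor (cycle_graph p) Y.

Definition backtracking p (Y : graph) (c : pcycle p Y) : Prop :=
  exists n : 'I_p, mor1 c (ordS n, true) = mor1 c (n, false).

Definition nb_cycle (Y : graph) (p : nat) (c : pcycle p Y) : Prop :=
  ~ backtracking c.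

Definition has_card (T : Type) (P : T -> Prop) (n : nat) : Prop :=
  exists l : list T, List.NoDup l /\ length l = n /\ (forall x, P x <-> List.In x l).

Definition injective_mor (G H : graph) (k : mor G H) : Prop :=
  injective (mor0 k) /\ injective (mor1 k).

(* U contains a subgraph (image of the embedding c) isomorphic to c^p_U such
   that removing its arcs leaves a forest each of whose trees meets the cycle
   in exactly one node *)
Definition unicyclic_with (p : nat) (U : graph) (c : mor (cycle_graph p) U) : Prop :=
  let removed := fun e : harc U => exists a, mor1 c a = e in
  let adj := fun x y : node U => exists e, ~ removed e /\ src e = x /\ tgt e = y in
  let conn := clos_refl_trans (node U) adj in
  (* the remaining graph is a forest: it contains no subgraph isomorphic to
     some c^q_U, q >= 1 *)
  (forall q (k : mor (cycle_graph q) U), 0 < q -> injective_mor k ->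
      ~ (forall a, ~ removed (mor1 k a))) /\
  (* each tree (connected component) meets the cycle in exactly one node *)
  (forall v : node U, exists n : 'I_p,
      conn v (mor0 c n) /\ forall n' : 'I_p, conn v (mor0 c n') -> n' = n).

Definition in_R (X : graph) (p : nat) (U : graph) (u : mor U X) : Prop :=
  covering u /\
  exists c : mor (cycle_graph p) U, injective_mor c /\ unicyclic_with c.

(* h (from f to g in C_X) is a weak equivalence: for all p >= 1 and U in R^p_X,
   composition with h : Hom_{C_X}(U,Y) -> Hom_{C_X}(U,Z) is bijective *)
Definition weak_equiv (X Y Z : graph) (f : mor Y X) (g : mor Z X) (h : mor Y Z)
  : Prop :=
  forall p, 0 < p -> forall (U : graph) (u : mor U X), in_R p u ->
    (forall k k' : mor U Y, covering k -> covering k' ->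
        mor_comp f k = u -> mor_comp f k' = u ->
        mor_comp h k = mor_comp h k' -> k = k') /\
    (forall m : mor U Z, covering m -> mor_comp g m = u ->
        exists k : mor U Y, [/\ covering k, mor_comp f k = u & mor_comp h k = m]).

(* coefficient n of exp(S), S = sum_{p>=1} c_p t^p / p ; since S has no constant
   term, only S truncated at degree n and the powers S^m, m <= n, contribute. *)
Local Open Scope ring_scope.
Definition zeta_trunc_log (c : nat -> nat) (n : nat) : {poly rat} :=
  \sum_(1 <= p < n.+1) (((c p)%:R / (p%:R)) *: 'X^p).
Definition ihara_zeta (c : nat -> nat) : nat -> rat :=
  fun n => (\sum_(m < n.+1) ((m`!)%:R)^-1 *: (zeta_trunc_log c n) ^+ m)`_n.

(* Main.v *)
Require Import Defs.
From mathcomp Require Import all_boot all_order all_algebra.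
Import Defs.
From Stdlib Require Import ProofIrrelevance FunctionalExtensionality ClassicalEpsilon.
From Stdlib Require Relation_Operators List.
Import Relation_Operators.
Set Implicit Arguments. Unset Strict Implicit. Unset Printing Implicit Defensive.

Lemma mor_ext (G H : graph) (a b : mor G H) :
  (forall x, mor0 a x = mor0 b x) -> (forall e, mor1 a e = mor1 b e) -> a = b.
Proof.
case: a => a0 a1 as1 at1 ai1; case: b => b0 b1 bs1 bt1 bi1 /= H0 H1.
have E0 : a0 = b0 by apply: functional_extensionality.
have E1 : a1 = b1 by apply: functional_extensionality.
subst b0 b1; f_equal; apply: proof_irrelevance.
Qed.

Lemma same_arc_trans (G : graph) (a b d : harc G) :
  same_arc a b -> same_arc b d -> same_arc a d.
Proof.
rewrite /same_arc => [[->|->]] [->|->]; rewrite ?inv_invol; tauto.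
Qed.

Lemma same_arc_sym (G : graph) (a b : harc G) : same_arc a b -> same_arc b a.
Proof. rewrite /same_arc => [[->|->]]; rewrite ?inv_invol; tauto. Qed.

Lemma tgt_inv (G : graph) (e : harc G) : tgt (inv e) = src e.
Proof. by rewrite -src_inv inv_invol. Qed.

Lemma arc_at_inv (G : graph) (x : node G) e : arc_at x e -> arc_at x (inv e).
Proof. by rewrite /arc_at src_inv tgt_inv; tauto. Qed.

Lemma arc_at_src (G : graph) (x : node G) e :
  arc_at x e -> exists e0, src e0 = x /\ same_arc e0 e.
Proof.
case=> H; first by exists e; split => //; left.
by exists (inv e); split; [rewrite src_inv | right; rewrite inv_invol].
Qed.

Lemma mor_same_arc G H (k : mor G H) e e' :
  same_arc e e' -> same_arc (mor1 k e) (mor1 k e').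
Proof. by case=> ->; [left|right; rewrite mor_inv]. Qed.

Lemma arc_at_mor G H (k : mor G H) x e : arc_at x e -> arc_at (mor0 k x) (mor1 k e).
Proof. by rewrite /arc_at mor_src mor_tgt => [[->|->]]; tauto. Qed.

Lemma star_covering G H (k : mor G H) : no_loops H ->
  (forall e e', src e = src e' -> mor1 k e = mor1 k e' -> e = e') ->
  (forall x d, src d = mor0 k x -> exists e, src e = x /\ mor1 k e = d) ->
  covering k.
Proof.
move=> nl inj sur x; split.
- move=> e e' /arc_at_src [e0 [s0 a0]] /arc_at_src [e1 [s1 a1]] sa.
  have sa' : same_arc (mor1 k e0) (mor1 k e1).
    apply: same_arc_trans (mor_same_arc k a0) _.
    exact: same_arc_trans sa (mor_same_arc k (same_arc_sym a1)).
  case: sa' => E.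
  + have := inj e1 e0; rewrite s0 s1 E => /(_ erefl erefl) E'.
    apply: same_arc_trans (same_arc_sym a0) _; rewrite -E'.
    exact: a1.
  + exfalso; apply: (nl (mor1 k e0)).
    rewrite mor_src s0 -s1 -mor_src E src_inv. done.
- move=> d /arc_at_src [d0 [s0 a0]].
  have [e [se ke]] := sur x d0 s0.
  by exists e; split; [left|rewrite ke].
Qed.

Lemma covering_comp G H K (l : mor H K) (k : mor G H) :
  covering k -> covering l -> covering (mor_comp l k).
Proof.
move=> ck cl x; split.
- move=> e e' ae ae' sa.
  apply: (proj1 (ck x)) => //.
  by apply: (proj1 (cl (mor0 k x))) => //; apply: arc_at_mor.
- move=> d ad.
  have [e1 [ae1 s1]] := proj2 (cl (mor0 k x)) d ad.
  have [e [ae s]] := proj2 (ck x) e1 ae1.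
  exists e; split => //.
  exact: same_arc_trans (mor_same_arc l s) s1.
Qed.

Lemma covering_cancel G H K (l : mor H K) (k : mor G H) :
  covering l -> covering (mor_comp l k) -> covering k.
Proof.
move=> cl clk x; split.
- move=> e e' ae ae' sa.
  apply: (proj1 (clk x)) => //.
  exact: (mor_same_arc l sa).
- move=> d ad.
  have [e [ae s]] := proj2 (clk x) (mor1 l d) (arc_at_mor l ad).
  exists e; split => //.
  apply: (proj1 (cl (mor0 k x))) => //.
  exact: arc_at_mor.
Qed.

Lemma card_bij (A B : Type) (P : A -> Prop) (Q : B -> Prop) (phi : A -> B) n m :
  has_card P n -> has_card Q m -> (forall a, P a -> Q (phi a)) ->
  (forall a a', P a -> P a' -> phi a = phi a' -> a = a') ->
  (forall b, Q b -> exists a, P a /\ phi a = b) -> n = m.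
Proof.
move=> [lA [ndA [<- hA]]] [lB [ndB [<- hB]]] PQ inj sur.
have ndM : List.NoDup (List.map phi lA).
  have : forall a, List.In a lA -> P a by move=> a /hA.
  elim: lA ndA {hA} => [|a l IH] nd Hl /=; first by constructor.
  inversion nd; subst; constructor.
    move=> /List.in_map_iff [a' [E In']].
    have := inj a' a (Hl a' (or_intror In')) (Hl a (or_introl erefl)) E.
    by move=> Ea; subst a'.
  by apply: IH => // a' Ha'; apply: Hl; right.
apply/eqP; rewrite eqn_leq; apply/andP; split; apply/leP.
- rewrite -(List.length_map phi).
  apply: List.NoDup_incl_length => // b /List.in_map_iff [a [<- Ia]].
  by apply/hB; apply/PQ/hA.
- rewrite -(List.length_map phi lA).
  apply: List.NoDup_incl_length => // b /hB Qb.
  have [a [Pa <-]] := sur b Qb.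
  by apply: List.in_map; apply/hA.
Qed.

Section Cons.
Variables (Z : graph) (hZ : no_loops Z) (p : nat) (ga : pcycle p Z).
Hypothesis hga : nb_cycle ga.

Lemma cyc_uniq (a a' : 'I_p * bool) :
  cyc_src a = cyc_src a' -> mor1 ga a = mor1 ga a' -> a = a'.
Proof.
case: a => i [] ; case: a' => j []; rewrite /cyc_src /= => E G.
- by rewrite E.
- exfalso; apply: hga; exists j; by rewrite -E.
- exfalso; apply: hga; exists i; by rewrite E.
- by rewrite (ordS_inj E).
Qed.

Definition endpt (n : 'I_p) (w : seq (harc Z)) : node Z :=
  match w with [::] => mor0 ga n | e :: _ => tgt e end.

Fixpoint valid (n : 'I_p) (w : seq (harc Z)) : Prop :=
  match w with
  | [::] => True
  | e :: w' => [/\ valid n w', src e = endpt n w' &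
      match w' with
      | [::] => forall a, cyc_src a = n -> e <> mor1 ga a
      | e'' :: _ => e <> inv e'' end]
  end.

Definition nbr (x : 'I_p * seq (harc Z)) (e : harc Z) : 'I_p * seq (harc Z) :=
  match x.2 with
  | [::] => match excluded_middle_informative
                    (exists a : 'I_p * bool, cyc_src a = x.1 /\ mor1 ga a = e) with
            | left H => (cyc_tgt (proj1_sig (constructive_indefinite_description _ H)), [::])
            | right _ => (x.1, [:: e]) end
  | e' :: w' => match excluded_middle_informative (e = inv e') with
                | left _ => (x.1, w')
                | right _ => (x.1, e :: x.2) end
  end.

Lemma nbr_spec n w e :
  (w = [::] /\ exists a, [/\ cyc_src a = n, mor1 ga a = e & nbr (n, w) e = (cyc_tgt a, [::])])
  \/ [/\ nbr (n, w) e = (n, e :: w),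
        (w = [::] -> forall a, cyc_src a = n -> e <> mor1 ga a) &
        (forall e' w', w = e' :: w' -> e <> inv e')]
  \/ (exists e' w', [/\ w = e' :: w', e = inv e' & nbr (n, w) e = (n, w')]).
Proof.
rewrite /nbr /=; case: w => [|e' w'].
- case: excluded_middle_informative => [H|H].
  + left; split => //; case: constructive_indefinite_description => a [Ha1 Ha2] /=.
    by exists a.
  + right; left; split => // _ a Ha E; apply: H; exists a; split => //.
- case: excluded_middle_informative => [H|H].
  + by right; right; exists e', w'.
  + right; left; by split => // e'' w'' [<- _].
Qed.

Lemma cyc_tgt_inv (a : 'I_p * bool) : cyc_tgt (cyc_inv a) = cyc_src a.
Proof. by case: a => i []. Qed.

Lemma nbr_valid n w e : valid n w -> src e = endpt n w ->
  valid (nbr (n, w) e).1 (nbr (n, w) e).2.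
Proof.
move=> V S; case: (nbr_spec n w e) => [[-> [a [_ _ ->]]] //|[[E H1 H2]|[e' [w' [E1 E2 ->]]]]].
- rewrite E /=; split => //.
  by case: w H1 H2 {V S E} => [H1 _|e'' w'' _ H2] ; [move=> a Ha Ea; apply: (H1 erefl a Ha) | apply: (H2 e'' w'')].
- by move: V; rewrite E1 /= => [[]].
Qed.

Lemma nbr_endpt n w e : valid n w -> src e = endpt n w ->
  endpt (nbr (n, w) e).1 (nbr (n, w) e).2 = tgt e.
Proof.
move=> V S; case: (nbr_spec n w e) => [[-> [a [_ <- ->]]]|[[-> _ _]|[e' [w' [E1 E2 ->]]]]] //=.
- by rewrite mor_tgt.
- by move: V; rewrite E1 E2 tgt_inv /= => [[_ ->]].
Qed.

Lemma nbr_inv n w e : valid n w -> src e = endpt n w ->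
  nbr (nbr (n, w) e) (inv e) = (n, w).
Proof.
move=> V S; case: (nbr_spec n w e) => [[-> [a [Ha <- ->]]]|[[-> H1 H2]|[e' [w' [E1 E2 ->]]]]].
- case: (nbr_spec (cyc_tgt a) [::] (inv (mor1 ga a))) => [[_ [a' [Ha' Ea' ->]]]|[[_ H1 _]|[e' [w' [//]]]]].
  + have : a' = cyc_inv a by apply: cyc_uniq; rewrite ?cyc_src_inv // Ea' mor_inv.
    by move=> ->; rewrite cyc_tgt_inv Ha.
  + exfalso; apply: (H1 erefl (cyc_inv a)); first by rewrite cyc_src_inv.
    by rewrite mor_inv.
- case: (nbr_spec n (e :: w) (inv e)) => [[//]|[[_ _ H]|[e' [w' [[<- <-] _ ->]]]]] //.
  by exfalso; apply: (H e w erefl).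
- rewrite E2 inv_invol.
  move: V; rewrite E1 /= => [[V1 S1 C1]].
  case: (nbr_spec n w' e') => [[E3 [a [Ha Ea _]]]|[[-> _ _]|[e'' [w'' [E3 E4 _]]]]].
  + by exfalso; move: C1; rewrite E3 => /(_ a Ha); rewrite Ea.
  + done.
  + by exfalso; move: C1; rewrite E3.
Qed.

Definition UN := {x : 'I_p * seq (harc Z) | valid x.1 x.2}.
Definition mN (x : UN) : node Z := endpt (sval x).1 (sval x).2.

Lemma UN_eq (x y : UN) : sval x = sval y -> x = y.
Proof.
case: x => x Px; case: y => y Py /= E; subst y; f_equal; apply: proof_irrelevance.
Qed.

Lemma valid_sval (x : UN) : valid (sval x).1 (sval x).2.
Proof. exact: proj2_sig x. Qed.

Lemma nb_valid (x : UN) e : src e = mN x -> valid (nbr (sval x) e).1 (nbr (sval x) e).2.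
Proof. case: x => [[n w] V] /= P; exact: nbr_valid. Qed.

Definition nb (x : UN) (e : harc Z) (P : src e = mN x) : UN :=
  exist _ (nbr (sval x) e) (nb_valid P).

Lemma nb_mN (x : UN) e (P : src e = mN x) : mN (nb P) = tgt e.
Proof. case: x P => [[n w] V] /= P; exact: nbr_endpt. Qed.

Definition UH := {x : UN & {e : harc Z | src e = mN x}}.
Definition usrc (h : UH) : UN := projT1 h.
Definition utgt (h : UH) : UN := nb (proj2_sig (projT2 h)).
Definition ue (h : UH) : harc Z := sval (projT2 h).

Lemma uinv_proof (h : UH) : src (inv (ue h)) = mN (utgt h).
Proof. by rewrite src_inv /utgt nb_mN. Qed.

Definition uinv (h : UH) : UH := existT _ (utgt h) (exist _ (inv (ue h)) (uinv_proof h)).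

Lemma UH_eq (h h' : UH) : usrc h = usrc h' -> ue h = ue h' -> h = h'.
Proof.
case: h => x [e P]; case: h' => x' [e' P'] /=; rewrite /usrc /ue /= => E1 E2.
subst x' e'; f_equal; f_equal; apply: proof_irrelevance.
Qed.

Lemma uinv_invol (h : UH) : uinv (uinv h) = h.
Proof.
apply: UH_eq; rewrite /uinv /usrc /ue /= ?inv_invol //.
apply: UN_eq; rewrite /utgt /=.
case: h => [[[n w] V] [e P]] /=.
exact: nbr_inv.
Qed.

Lemma usrc_inv (h : UH) : usrc (uinv h) = utgt h.
Proof. by []. Qed.

Definition Ug : graph := @Graph UN UH usrc utgt uinv uinv_invol usrc_inv.

Definition mU : mor Ug Z.
Proof.
refine (@Mor Ug Z mN ue _ _ _).
- by move=> h; exact: (proj2_sig (projT2 h)).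
- by move=> h; rewrite /= /utgt nb_mN.
- by [].
Defined.

Definition c0 (n : 'I_p) : UN := exist (fun x => valid x.1 x.2) (n, [::]) I.

Lemma c1_proof (a : 'I_p * bool) : src (mor1 ga a) = mN (c0 (cyc_src a)).
Proof. by rewrite mor_src. Qed.

Definition c1 (a : 'I_p * bool) : UH := existT _ (c0 (cyc_src a)) (exist _ (mor1 ga a) (c1_proof a)).

Lemma c1_tgt a : utgt (c1 a) = c0 (cyc_tgt a).
Proof.
apply: UN_eq; rewrite /utgt /=.
case: (nbr_spec (cyc_src a) [::] (mor1 ga a)) => [[_ [a' [Ha' Ea' ->]]]|[[_ H _]|[e' [w' [//]]]]].
- by rewrite (cyc_uniq Ha' Ea').
- by exfalso; apply: (H erefl a erefl).
Qed.

Definition cU : mor (cycle_graph p) Ug.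
Proof.
refine (@Mor (cycle_graph p) Ug c0 c1 _ _ _).
- by [].
- by move=> a; rewrite /= c1_tgt.
- move=> a; apply: UH_eq; rewrite /= /usrc /ue /=.
  + by rewrite c1_tgt cyc_src_inv.
  + by rewrite mor_inv.
Defined.

Definition rem (e : harc Ug) : Prop := exists a, mor1 cU a = e.
Definition adjU (x y : node Ug) : Prop := exists e : harc Ug, ~ rem e /\ src e = x /\ tgt e = y.

Lemma tree_step (h : harc Ug) : ~ rem h ->
  (sval (tgt h)).1 = (sval (src h)).1 /\
  ((exists e' w', (sval (src h)).2 = e' :: w' /\ mor1 mU h = inv e') \/
   size (sval (tgt h)).2 = (size (sval (src h)).2).+1).
Proof.
move: h; rewrite /Ug /= => -[[[n w] V] [e P]] NR.
rewrite /utgt /usrc /=.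
case: (nbr_spec n w e) => [[E [a [Ha Ea _]]]|[[-> _ _]|[e' [w' [E1 E2 ->]]]]].
- exfalso; apply: NR; exists a; apply: UH_eq => //=.
  by apply: UN_eq; rewrite /= Ha E.
- by split => //; right.
- by split => //; left; exists e', w'.
Qed.

Lemma forest q (k : mor (cycle_graph q) Ug) : 0 < q -> injective_mor k ->
  ~ (forall a, ~ rem (mor1 k a)).
Proof.
move=> q0 [_ ik1] NR.
have [i Ei] := eq_bigmax (fun j => size (sval (mor0 k j)).2) (eq_ind_r (fun m => 0 < m) q0 (card_ord q)).
have st : forall a : 'I_q * bool, cyc_src a = i ->
    exists e' w', (sval (mor0 k i)).2 = e' :: w' /\ mor1 mU (mor1 k a) = inv e'.
  move=> a Ha.
  have Es : src (mor1 k a) = mor0 k i by rewrite mor_src -Ha.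
  have Et : tgt (mor1 k a) = mor0 k (cyc_tgt a) by rewrite mor_tgt.
  case: (tree_step (NR a)) => _ [|]; rewrite Es //.
  rewrite Et => H; exfalso.
  have := @leq_bigmax _ (fun j : 'I_q => size (sval (mor0 k j)).2) (cyc_tgt a).
  by rewrite Ei H ltnn.
have [e1 [w1 [E1 F1]]] := st (i, true) erefl.
have [e2 [w2 [E2 F2]]] := st (ord_pred i, false) (ord_predK i).
have E12 : e1 = e2 by move: E1; rewrite E2 => -[].
have : mor1 k (i, true) = mor1 k (ord_pred i, false).
  apply: UH_eq.
  - have -> : usrc (mor1 k (i, true)) = mor0 k i by exact: (mor_src k (i, true)).
    have -> : usrc (mor1 k (ord_pred i, false)) = mor0 k i.
      by have := mor_src k (ord_pred i, false); rewrite /= /cyc_src /= ord_predK.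
    done.
  - by move: F1 F2 => /= -> ->; rewrite E12.
by move/ik1.
Qed.

Lemma conn_root n w (V : valid n w) :
  clos_refl_trans (node Ug) adjU (exist (fun x => valid x.1 x.2) (n, w) V) (c0 n).
Proof.
elim: w V => [|e w IH] V.
- have -> : V = I by case: V.
  exact: rt_refl.
- have V' := V; move: V' => /= [V1 S1 C1].
  have P : src (inv e) = mN (exist (fun x => valid x.1 x.2) (n, e :: w) V) by rewrite src_inv.
  apply: rt_trans (IH V1).
  apply: rt_step.
  exists (existT _ _ (exist _ (inv e) P)); split; last split => //.
  + case=> a /(f_equal usrc) /(f_equal sval) /= [_ //].
  + apply: UN_eq; rewrite /= /utgt /=.
    case: (nbr_spec n (e :: w) (inv e)) => [[//]|[[_ _ H]|[e' [w' [[<- <-] _ ->]]]]] //.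
    by exfalso; apply: (H e w erefl).
Qed.

Lemma conn_idx x y : clos_refl_trans (node Ug) adjU x y -> (sval x).1 = (sval y).1.
Proof.
elim => [x' y' [h [NR [<- <-]]]|//|x' y' z' _ -> _ ->] //.
by case: (tree_step NR).
Qed.

Lemma mU_cov : covering mU.
Proof.
apply: star_covering hZ _ _.
- by move=> e e' Es Ee; apply: UH_eq.
- move=> x d P; exists (existT _ x (exist _ d P)); split => //.
Qed.

Lemma cU_inj : injective_mor cU.
Proof.
split.
- by move=> n n' /(f_equal sval) /= [].
- move=> a a' E.
  have E1 : cyc_src a = cyc_src a' by move: E => /(f_equal usrc) /(f_equal sval) /= [].
  have E2 : mor1 ga a = mor1 ga a' by move: E => /(f_equal ue).
  exact: cyc_uniq.
Qed.

Lemma U_in_R (X : graph) (g : mor Z X) : covering g -> in_R p (mor_comp g mU).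
Proof.
move=> cg; split; first exact: covering_comp mU_cov cg.
exists cU; split; first exact: cU_inj.
split.
- move=> q k q0 ik; exact: (@forest q k q0 ik).
- move=> v; exists (sval v).1; split.
  + case: v => [[n w] V] /=; exact: conn_root.
  + by move=> n' /conn_idx.
Qed.

Lemma mc_ga : mor_comp mU cU = ga.
Proof. by apply: mor_ext. Qed.

End Cons.


Section Lift.
Variables (Y Z : graph) (hY : no_loops Y) (hZ : no_loops Z) (h : mor Y Z).
Hypothesis hh : covering h.

Lemma lift_uniq (e e' : harc Y) : src e = src e' -> mor1 h e = mor1 h e' -> e = e'.
Proof.
move=> Es Eh.
have := proj1 (hh (src e)) e e' (or_introl erefl) (or_introl (esym Es)) (or_introl (esym Eh)).
case=> // E; case: (@hY e).
by rewrite -[in RHS]src_inv -E -Es.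
Qed.

Lemma lift_ex (y : node Y) (d : harc Z) : src d = mor0 h y ->
  exists e, src e = y /\ mor1 h e = d.
Proof.
move=> Sd.
have [e1 [[Se|Te] Ea]] := proj2 (hh y) d (or_introl Sd).
- case: Ea => Ea; first by exists e1.
  case: (@hZ (mor1 h e1)).
  by rewrite mor_src Se -Sd Ea src_inv.
- case: Ea => Ea.
  + case: (@hZ d); by rewrite Sd -Te -mor_tgt Ea.
  + exists (inv e1); split; first by rewrite src_inv.
    by rewrite mor_inv Ea.
Qed.

Lemma nb_comp p (de : pcycle p Y) : nb_cycle de -> nb_cycle (mor_comp h de).
Proof.
move=> nd [j Ej]; apply: nd; exists j.
apply: lift_uniq => //.
by rewrite !mor_src.
Qed.

Definition liftN (y : node Y) (e : harc Z) : node Y :=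
  match excluded_middle_informative (exists e', src e' = y /\ mor1 h e' = e) with
  | left H => tgt (proj1_sig (constructive_indefinite_description _ H))
  | right _ => y end.

Lemma liftN_spec y e : src e = mor0 h y ->
  exists e1, [/\ src e1 = y, mor1 h e1 = e & liftN y e = tgt e1].
Proof.
move=> S; rewrite /liftN; case: excluded_middle_informative => [H|H].
- case: constructive_indefinite_description => e1 [S1 H1] /=; by exists e1.
- by exfalso; apply/H/lift_ex.
Qed.

Section K.
Variables (p : nat) (ga : pcycle p Z) (hga : nb_cycle ga) (de : pcycle p Y).
Hypothesis hde : mor_comp h de = ga.

Lemma hde0 n : mor0 h (mor0 de n) = mor0 ga n.
Proof. by rewrite -hde. Qed.
Lemma hde1 a : mor1 h (mor1 de a) = mor1 ga a.
Proof. by rewrite -hde. Qed.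

Fixpoint liftp (y0 : node Y) (w : seq (harc Z)) : node Y :=
  match w with [::] => y0 | e :: w' => liftN (liftp y0 w') e end.

Definition L (x : UN ga) : node Y := liftp (mor0 de (sval x).1) (sval x).2.

Lemma liftp_h n w : valid ga n w -> mor0 h (liftp (mor0 de n) w) = endpt ga n w.
Proof.
elim: w => [|e w IH] /=; first by rewrite hde0.
move=> [V S _].
have [e1 [S1 H1 ->]] := liftN_spec (etrans S (esym (IH V))).
by rewrite -mor_tgt H1.
Qed.

Lemma Lh (x : UN ga) : mor0 h (L x) = mN x.
Proof. case: x => [[n w] V]; exact: liftp_h. Qed.

Lemma k1_proof (u : UH ga) : src (ue u) = mor0 h (L (usrc u)).
Proof. by rewrite Lh; exact: (proj2_sig (projT2 u)). Qed.

Definition k1 (u : UH ga) : harc Y :=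
  proj1_sig (constructive_indefinite_description _ (lift_ex (k1_proof u))).

Lemma k1_spec u : src (k1 u) = L (usrc u) /\ mor1 h (k1 u) = ue u.
Proof. rewrite /k1; case: constructive_indefinite_description => e /= [] //. Qed.

Lemma k1_tgt u : tgt (k1 u) = L (utgt u).
Proof.
have [S1 H1] := k1_spec u.
move: (k1 u) S1 H1 => k.
move: u => [[[n w] V] [e P]]; rewrite /usrc /ue /utgt /L /= => S1 H1.
case: (nbr_spec ga n w e) => [[E [a [Ha Ea ->]]]|[[-> _ _]|[e' [w' [E1 E2 ->]]]]] /=.
- subst w.
  have -> : k = mor1 de a.
    apply: lift_uniq; first by rewrite S1 mor_src /= Ha.
    by rewrite H1 hde1.
  by rewrite mor_tgt.
- have [e1 [S2 H2 ->]] := liftN_spec (etrans P (esym (liftp_h V))).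
  by congr tgt; apply: lift_uniq; rewrite ?S1 ?S2 ?H1 ?H2.
- subst w; have := V; rewrite /= => -[V1 S3 _].
  have [e1 [S2 H2 E3]] := liftN_spec (etrans S3 (esym (liftp_h V1))).
  rewrite /= E3 in S1.
  have -> : k = inv e1.
    apply: lift_uniq; first by rewrite S1 src_inv.
    by rewrite H1 mor_inv H2 E2.
  by rewrite tgt_inv.
Qed.

Definition kU : mor (Ug hga) Y.
Proof.
refine (@Mor (Ug hga) Y L k1 _ _ _).
- by move=> u; exact: (proj1 (k1_spec u)).
- by move=> u; exact: k1_tgt.
- move=> u; apply: lift_uniq.
  + by rewrite src_inv k1_tgt (proj1 (k1_spec _)).
  + by rewrite mor_inv !(proj2 (k1_spec _)).
Defined.

Lemma hk : mor_comp h kU = mU hga.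
Proof.
apply: mor_ext => /=; first exact: Lh.
by move=> u; exact: (proj2 (k1_spec u)).
Qed.

Lemma kc : mor_comp kU (cU hga) = de.
Proof.
apply: mor_ext => //= a.
apply: lift_uniq.
- by rewrite (proj1 (k1_spec _)) mor_src.
- by rewrite (proj2 (k1_spec _)) hde1.
Qed.

Lemma kU_cov : covering kU.
Proof. apply: (covering_cancel hh); rewrite hk; exact: mU_cov. Qed.

End K.
End Lift.


Lemma mor_comp_assoc A B C D (a : mor C D) (b : mor B C) (c : mor A B) :
  mor_comp a (mor_comp b c) = mor_comp (mor_comp a b) c.
Proof. by apply: mor_ext. Qed.

Theorem proposition5p4 (X Y Z : graph) (f : mor Y X) (g : mor Z X)
  (hf : covering f) (hg : covering g)
  (hY : no_loops Y) (hZ : no_loops Z)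
  (finY : forall p, 0 < p -> exists n, has_card (@nb_cycle Y p) n)
  (finZ : forall p, 0 < p -> exists n, has_card (@nb_cycle Z p) n)
  (h : mor Y Z) (hh : covering h) (hcomm : mor_comp g h = f)
  (hweq : weak_equiv f g h)
  (cY cZ : nat -> nat)
  (hcY : forall p, 0 < p -> has_card (@nb_cycle Y p) (cY p))
  (hcZ : forall p, 0 < p -> has_card (@nb_cycle Z p) (cZ p)) :
  ihara_zeta cY = ihara_zeta cZ.
Proof.
have cYZ : forall q, 0 < q -> cY q = cZ q.
  move=> q q0.
  apply: (card_bij (hcY q q0) (hcZ q q0) (phi := fun de => mor_comp h de)).
  - by move=> de; apply: nb_comp.
  - move=> de1 de2 n1 n2 E.
    have hga : nb_cycle (mor_comp h de1) by apply: nb_comp.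
    have E1 : mor_comp h de1 = mor_comp h de1 by [].
    have E2 : mor_comp h de2 = mor_comp h de1 by rewrite E.
    have [inj _] := hweq q q0 _ _ (U_in_R hZ hga hg).
    have fk : forall (de : pcycle q Y) (hde : mor_comp h de = mor_comp h de1),
        mor_comp f (kU hY hZ hh hga hde) = mor_comp g (mU hga).
      move=> de hde; rewrite -hcomm -mor_comp_assoc.
      by rewrite (hk hY hZ hh hga hde).
    have := inj _ _ (kU_cov hY hZ hh E1) (kU_cov hY hZ hh E2) (fk _ E1) (fk _ E2).
    rewrite (hk hY hZ hh hga E1) (hk hY hZ hh hga E2) => /(_ erefl) Ek.
    by rewrite -(kc hY hZ hh hga E1) -(kc hY hZ hh hga E2) Ek.
  - move=> ga hga.
    have [_ sur] := hweq q q0 _ _ (U_in_R hZ hga hg).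
    have [k [ck fk hk']] := sur (mU hga) (@mU_cov _ hZ _ _ hga) erefl.
    have Eg : mor_comp h (mor_comp k (cU hga)) = ga.
      by rewrite mor_comp_assoc hk' mc_ga.
    exists (mor_comp k (cU hga)); split => //.
    move=> [j Ej]; apply: (hga); exists j.
    by rewrite -Eg; move: Ej => /= ->.
apply: functional_extensionality => n.
rewrite /ihara_zeta.
suff -> : zeta_trunc_log cY n = zeta_trunc_log cZ n by [].
rewrite /zeta_trunc_log; apply: eq_big_nat => i /andP [i0 _].
by rewrite cYZ.
Qed.
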